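(* Let $\mathcal{L}$ be a base algebra over a Hopf algebra $\mathcal{H}$, and let $\mathcal{A}$ be a left $\mathcal{H}$-module equipped with an $\mathcal{H}$-equivariant linear map $\divideontimes\colon\mathcal{A}\otimes\mathcal{A}\to\mathcal{A}\otimes\mathcal{L}$. Then $\mathcal{A}$ is a dynamical associative algebra over $\mathcal{L}$ with respect to $\divideontimes$ if and only if the operation $$(\mathcal{A}\otimes\mathcal{L})\otimes(\mathcal{A}\otimes\mathcal{L})\xrightarrow{\ \mathrm{id}\otimes\tau_\mathcal{A}\otimes\mathrm{id}\ }\mathcal{A}\otimes\mathcal{A}\otimes\mathcal{L}\otimes\mathcal{L}\xrightarrow{\ \divideontimes\otimes\mathrm{m}\ }\mathcal{A}\otimes\mathcal{L}\otimes\mathcal{L}\xrightarrow{\ \mathrm{id}\otimes\mathrm{m}\ }\mathcal{A}\otimes\mathcal{L}$$ makes $\mathcal{A}\otimes\mathcal{L}$ an associative $\mathcal{H}$-module algebra.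
   Context: $\mathcal{H}$ is a Hopf algebra over a commutative ring $k$ (over a field of characteristic zero), Sweedler notation $\Delta(x)=x^{(1)}\otimes x^{(2)}$. A base algebra over $\mathcal{H}$ is a left $\mathcal{H}$-module algebra and left $\mathcal{H}$-comodule algebra $\mathcal{L}$ (action $\triangleright$, multiplication $\mathrm{m}$, coaction $\ell\mapsto\ell^{(1)}\otimes\ell^{[2]}$) such that $\{x^{(1)}\triangleright\ell\}^{(1)}x^{(2)}\otimes\{x^{(1)}\triangleright\ell\}^{[2]}=x^{(1)}\ell^{(1)}\otimes x^{(2)}\triangleright\ell^{[2]}$ and $\ell_1\ell_2=(\ell_1^{(1)}\triangleright\ell_2)\ell_1^{[2]}$. For an $\mathcal{H}$-module $A$, $\tau_A\colon\mathcal{L}\otimes A\to A\otimes\mathcal{L}$ is $\tau_A(\ell\otimes a)=\ell^{(1)}\triangleright a\otimes\ell^{[2]}$. A dynamical associative algebra over $\mathcal{L}$ is a left $\mathcal{H}$-module $\mathcal{A}$ with an $\mathcal{H}$-equivariant map $\divideontimes\colon\mathcal{A}\otimes\mathcal{A}\to\mathcal{A}\otimes\mathcal{L}$ such that the two maps $\mathcal{A}\otimes\mathcal{A}\otimes\mathcal{A}\to\mathcal{A}\otimes\mathcal{L}$ $$(\mathrm{id}\otimes\mathrm{m})\circ(\divideontimes\otimes\mathrm{id})\circ(\mathrm{id}\otimes\tau_\mathcal{A})\circ(\divideontimes\otimes\mathrm{id})\quad\text{and}\quad(\mathrm{id}\otimes\mathrm{m})\circ(\divideontimes\otimes\mathrm{id})\circ(\mathrm{id}\otimes\divideontimes)$$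 coincide. *)

(* Defs.v *)
(* Tensor products over a commutative ring are not in
   MathComp, so we construct them here (as a quotient of formal sums of pure
   tensors by the relation "equal under every bilinear map"), and then define
   Hopf algebras, base algebras and the dynamical structures of the paper. *)
From HB Require Import structures.
From mathcomp Require Import all_boot all_algebra.
From mathcomp Require Import generic_quotient boolp.
Set Implicit Arguments. Unset Strict Implicit. Unset Printing Implicit Defensive.
Import GRing.Theory.
Local Open Scope ring_scope.
Local Open Scope quotient_scope.

Section Tensor.
Variables (R : comNzRingType) (U V : lmodType R).

Definition bilinear_map (W : lmodType R) (f : U -> V -> W) :=
  (forall a u u' v, f (a *: u + u') v = a *: f u v + f u' v) /\
  (forall a u v v', f u (a *: v + v') = a *: f u v + f u v').

Definition tsum (W : zmodType) (f : U -> V -> W) (s : seq (U * V)) : W :=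
  \sum_(p <- s) f p.1 p.2.

Definition teqv (s t : seq (U * V)) : Prop :=
  forall (W : lmodType R) (f : U -> V -> W), bilinear_map f -> tsum f s = tsum f t.

Definition teqvb s t : bool := `[< teqv s t >].

Lemma teqvb_refl : reflexive teqvb.
Proof. by move=> s; apply/asboolP. Qed.
Lemma teqvb_sym : symmetric teqvb.
Proof.
by move=> s t; apply/asboolP/asboolP => H W f hf; rewrite (H W f hf).
Qed.
Lemma teqvb_trans : transitive teqvb.
Proof.
move=> t s u /asboolP H1 /asboolP H2; apply/asboolP => W f hf.
by rewrite (H1 W f hf) (H2 W f hf).
Qed.

Definition teqv_rel := EquivRel teqvb teqvb_refl teqvb_sym teqvb_trans.

Definition tensor := {eq_quot teqv_rel}.
HB.instance Definition _ := Choice.on tensor.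
HB.instance Definition _ := Quotient.on tensor.

Lemma bilin0l (W : lmodType R) (f : U -> V -> W) : bilinear_map f -> forall v, f 0 v = 0.
Proof.
move=> [h _] v; have := h 1 0 0 v; rewrite !scale1r addr0 => E.
by apply: (addrI (f 0 v)); rewrite addr0 -E.
Qed.

Lemma bilinZl (W : lmodType R) (f : U -> V -> W) : bilinear_map f ->
  forall a u v, f (a *: u) v = a *: f u v.
Proof.
move=> hf a u v; have := hf.1 a u 0 v; rewrite addr0 => ->.
by rewrite bilin0l // addr0.
Qed.

Lemma tsum_cat (W : zmodType) (f : U -> V -> W) s t : tsum f (s ++ t) = tsum f s + tsum f t.
Proof. by rewrite /tsum big_cat. Qed.

Definition tscale_seq (a : R) (s : seq (U * V)) := map (fun p => (a *: p.1, p.2)) s.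

Lemma tsum_scale (W : lmodType R) (f : U -> V -> W) : bilinear_map f ->
  forall a s, tsum f (tscale_seq a s) = a *: tsum f s.
Proof.
move=> hf a s; rewrite /tsum big_map scaler_sumr; apply: eq_bigr => p _.
by rewrite bilinZl.
Qed.

Lemma tsum_pi (W : lmodType R) (f : U -> V -> W) : bilinear_map f ->
  forall s, tsum f (repr (\pi_tensor s)) = tsum f s.
Proof.
move=> hf s; have /eqmodP /asboolP H : repr (\pi_tensor s) = s %[mod tensor].
  by rewrite reprK.
exact: H.
Qed.

Definition tzero : tensor := \pi_tensor [::].
Definition tadd (x y : tensor) : tensor := \pi_tensor (repr x ++ repr y).
Definition tscale (a : R) (x : tensor) : tensor := \pi_tensor (tscale_seq a (repr x)).
Definition topp (x : tensor) : tensor := tscale (-1) x.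

Lemma tensor_eqP (x y : tensor) :
  (forall (W : lmodType R) (f : U -> V -> W), bilinear_map f -> tsum f (repr x) = tsum f (repr y)) ->
  x = y.
Proof.
move=> H; rewrite -[x]reprK -[y]reprK; apply/eqmodP/asboolP => W f hf.
exact: H.
Qed.

Ltac tnorm hf :=
  repeat (rewrite ?(tsum_pi hf) ?(tsum_scale hf) ?tsum_cat /=).

Lemma taddA : associative tadd.
Proof. by move=> x y z; apply: tensor_eqP => W f hf; tnorm hf; rewrite addrA. Qed.
Lemma taddC : commutative tadd.
Proof. by move=> x y; apply: tensor_eqP => W f hf; tnorm hf; rewrite addrC. Qed.
Lemma tadd0 : left_id tzero tadd.
Proof.
by move=> x; apply: tensor_eqP => W f hf; tnorm hf; rewrite /tsum big_nil add0r.
Qed.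
Lemma taddN : left_inverse tzero topp tadd.
Proof.
move=> x; apply: tensor_eqP => W f hf; rewrite /topp /tscale; tnorm hf.
by rewrite scaleN1r addNr /tsum big_nil.
Qed.

HB.instance Definition _ := GRing.isZmodule.Build tensor taddA taddC tadd0 taddN.

Lemma tscaleA a b (x : tensor) : tscale a (tscale b x) = tscale (a * b) x.
Proof.
by apply: tensor_eqP => W f hf; rewrite /tscale; tnorm hf; rewrite scalerA.
Qed.
Lemma tscale1 : left_id 1 tscale.
Proof.
by move=> x; apply: tensor_eqP => W f hf; rewrite /tscale; tnorm hf; rewrite scale1r.
Qed.
Lemma tscaleDr : right_distributive tscale +%R.
Proof.
move=> a x y; apply: tensor_eqP => W f hf; rewrite /= /tadd /tscale.
by tnorm hf; rewrite scalerDr.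
Qed.
Lemma tscaleDl (x : tensor) : {morph tscale^~ x : a b / a + b}.
Proof.
move=> a b; apply: tensor_eqP => W f hf; rewrite /= /tadd /tscale.
by tnorm hf; rewrite scalerDl.
Qed.

HB.instance Definition _ :=
  GRing.Zmodule_isLmodule.Build R tensor tscaleA tscale1 tscaleDr tscaleDl.

Definition tmul (u : U) (v : V) : tensor := \pi_tensor [:: (u, v)].

(* the linear map U ⊗ V -> W induced by a bilinear map f : U -> V -> W
   (for f bilinear this is independent of the choice of representative) *)
Definition tlift (W : zmodType) (f : U -> V -> W) (t : tensor) : W := tsum f (repr t).

End Tensor.

Arguments tmul {R U V}.
Arguments tlift {R U V W}.
Notation "u ⊗ v" := (tmul u v) (at level 40, left associativity).

Section TensorOps.
Variable (R : comNzRingType).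

Definition linmap (U V : lmodType R) (f : U -> V) :=
  forall a u v, f (a *: u + v) = a *: f u + f v.

Definition tmap (U V U' V' : lmodType R) (f : U -> U') (g : V -> V')
  : tensor U V -> tensor U' V' := tlift (fun u v => f u ⊗ g v).

Definition tassoc (U V W : lmodType R) : tensor U (tensor V W) -> tensor (tensor U V) W :=
  tlift (fun u t => tlift (fun v w => (u ⊗ v) ⊗ w) t).

Definition talg_mul (B C : algType R) (t s : tensor B C) : tensor B C :=
  tlift (fun b c => tlift (fun b' c' => (b * b') ⊗ (c * c')) s) t.

Definition tact (H U V : lmodType R) (Delta : H -> tensor H H)
  (actU : H -> U -> U) (actV : H -> V -> V) (x : H) (t : tensor U V) : tensor U V :=
  tlift (fun h h' => tmap (actU h) (actV h') t) (Delta x).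

End TensorOps.

Section Hopf.
Variables (k : comNzRingType) (H : algType k).

Definition is_hopf (Delta : H -> tensor H H) (eps : H -> k) (S : H -> H) : Prop :=
  [/\
      [/\ linmap Delta,
          (forall a x y, eps (a *: x + y) = a * eps x + eps y) &
          linmap S],
      (forall x, tmap Delta id (Delta x) = tassoc (tmap id Delta (Delta x))),
      (forall x, tlift (fun h h' => eps h *: h') (Delta x) = x) /\
      (forall x, tlift (fun h h' => eps h' *: h) (Delta x) = x),
      [/\ forall x y, Delta (x * y) = talg_mul (Delta x) (Delta y),
          Delta 1 = 1 ⊗ 1,
          forall x y, eps (x * y) = eps x * eps y &
          eps 1 = 1] &
      (forall x, tlift (fun h h' => S h * h') (Delta x) = eps x *: 1) /\
      (forall x, tlift (fun h h' => h * S h') (Delta x) = eps x *: 1)].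

Definition is_Hmodule (M : lmodType k) (act : H -> M -> M) : Prop :=
  [/\ bilinear_map act,
      forall m, act 1 m = m &
      forall x y m, act (x * y) m = act x (act y m)].

Variable (Delta : H -> tensor H H) (eps : H -> k).

Definition is_Hmodule_algebra (L : algType k) (act : H -> L -> L) : Prop :=
  [/\ is_Hmodule act,
      forall x l1 l2, act x (l1 * l2) = tlift (fun h h' => act h l1 * act h' l2) (Delta x) &
      forall x, act x 1 = eps x *: 1].

Definition is_Hcomodule_algebra (L : algType k) (coact : L -> tensor H L) : Prop :=
  [/\ linmap coact,
      forall l, tmap Delta id (coact l) = tassoc (tmap id coact (coact l)),
      forall l, tlift (fun h m => eps h *: m) (coact l) = l,
      forall l1 l2, coact (l1 * l2) = talg_mul (coact l1) (coact l2) &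
      coact 1 = 1 ⊗ 1].

Definition is_base_algebra (L : algType k) (act : H -> L -> L) (coact : L -> tensor H L)
  : Prop :=
  [/\ is_Hmodule_algebra act,
      is_Hcomodule_algebra coact,
      (forall x l,
         tlift (fun h h' => tlift (fun g m => (g * h') ⊗ m) (coact (act h l))) (Delta x)
       = tlift (fun h h' => tlift (fun g m => (h * g) ⊗ act h' m) (coact l)) (Delta x)) &
      (forall l1 l2, l1 * l2 = tlift (fun h m => act h l2 * m) (coact l1))].

End Hopf.

Section Dynamical.
Variables (k : comNzRingType) (H : algType k) (Delta : H -> tensor H H).
Variables (L : algType k) (actL : H -> L -> L) (coact : L -> tensor H L).
Variables (A : lmodType k) (actA : H -> A -> A).
Variable (star : tensor A A -> tensor A L).

Definition tau : tensor L A -> tensor A L :=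
  tlift (fun l a => tlift (fun h m => actA h a ⊗ m) (coact l)).

(* (id ⊗ m) o (star ⊗ id) o (id ⊗ tau_A) o (star ⊗ id),
   on (A ⊗ A) ⊗ A *)
Definition dyn_lhs : tensor (tensor A A) A -> tensor A L :=
  tlift (fun t a3 =>
    tlift (fun b l =>
      tlift (fun a' l2 =>
        tlift (fun c l' => c ⊗ (l' * l2)) (star (b ⊗ a')))
      (tau (l ⊗ a3)))
    (star t)).

(* (id ⊗ m) o (star ⊗ id) o (id ⊗ star), on (A ⊗ A) ⊗ A *)
Definition dyn_rhs : tensor (tensor A A) A -> tensor A L :=
  tlift (fun t a3 =>
    tlift (fun a1 a2 =>
      tlift (fun b l =>
        tlift (fun c l' => c ⊗ (l' * l)) (star (a1 ⊗ b)))
      (star (a2 ⊗ a3)))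
    t).

Definition is_dynamical_assoc : Prop := forall t, dyn_lhs t = dyn_rhs t.

(* the product on A ⊗ L :
   (id ⊗ m) o (star ⊗ m) o (id ⊗ tau_A ⊗ id) *)
Definition dprod (u v : tensor A L) : tensor A L :=
  tlift (fun a l =>
    tlift (fun a' l' =>
      tlift (fun h l2 =>
        tlift (fun c l'' => c ⊗ (l'' * (l2 * l'))) (star (a ⊗ actA h a')))
      (coact l))
    v) u.

Definition is_assoc_Hmodule_algebra_AL : Prop :=
  (forall u v w, dprod (dprod u v) w = dprod u (dprod v w)) /\
  (forall x u v, tact Delta actA actL x (dprod u v)
                 = tlift (fun h h' => dprod (tact Delta actA actL h u)
                                            (tact Delta actA actL h' v)) (Delta x)).

End Dynamical.

(* Main.v *)
Require Import Defs.
From HB Require Import structures.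
From mathcomp Require Import all_boot all_algebra.
From mathcomp Require Import generic_quotient boolp.
From Stdlib Require Import Setoid Morphisms.
Set Implicit Arguments. Unset Strict Implicit. Unset Printing Implicit Defensive.
Import GRing.Theory.
Local Open Scope ring_scope.
Local Open Scope quotient_scope.

Section Infra.
Variable R : comNzRingType.

Lemma eq_tlift (U V : lmodType R) (W : zmodType) (f g : U -> V -> W) t :
  (forall u v, f u v = g u v) -> tlift f t = tlift g t.
Proof. by move=> e; rewrite /tlift /tsum; apply: eq_bigr => p _; rewrite e. Qed.

Lemma tlift_swap (U V U' V' : lmodType R) (W : zmodType) (f : U -> V -> U' -> V' -> W) t s :
  tlift (fun u v => tlift (fun u' v' => f u v u' v') s) t
  = tlift (fun u' v' => tlift (fun u v => f u v u' v') t) s.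
Proof. by rewrite /tlift /tsum; exact: exchange_big. Qed.

Lemma tlift_addE (U V : lmodType R) (W : lmodType R) (f : U -> V -> W) x y :
  bilinear_map f -> tlift f (x + y) = tlift f x + tlift f y.
Proof.
move=> hf; rewrite /tlift; change (x + y) with (tadd x y).
by rewrite /tadd tsum_pi // tsum_cat.
Qed.

Lemma tlift_scaleE (U V : lmodType R) (W : lmodType R) (f : U -> V -> W) a x :
  bilinear_map f -> tlift f (a *: x) = a *: tlift f x.
Proof.
move=> hf; rewrite /tlift; change (a *: x) with (tscale a x).
by rewrite /tscale tsum_pi // tsum_scale.
Qed.

Lemma tlift_tmul (U V : lmodType R) (W : lmodType R) (f : U -> V -> W) u v :
  bilinear_map f -> tlift f (u ⊗ v) = f u v.
Proof.
by move=> hf; rewrite /tlift /tmul tsum_pi // /tsum big_cons big_nil addr0.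
Qed.

Lemma tlift_lin (U V : lmodType R) (W : lmodType R) (f : U -> V -> W) :
  bilinear_map f -> linmap (tlift f).
Proof. by move=> hf a x y; rewrite tlift_addE // tlift_scaleE. Qed.

Lemma linmap0 (U V : lmodType R) (g : U -> V) : linmap g -> g 0 = 0.
Proof.
move=> hg; have := hg 1 0 0; rewrite !scale1r addr0 => E.
by apply: (addrI (g 0)); rewrite addr0 -E.
Qed.

Lemma tlift0 (U V : lmodType R) (W : lmodType R) (f : U -> V -> W) :
  bilinear_map f -> tlift f (0 : tensor U V) = 0.
Proof. by move=> hf; apply: linmap0; apply: tlift_lin. Qed.

Lemma linmapD (U V : lmodType R) (g : U -> V) x y : linmap g -> g (x + y) = g x + g y.
Proof. by move=> hg; have := hg 1 x y; rewrite !scale1r. Qed.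

Lemma linmap_sum (U V : lmodType R) (g : U -> V) (I : Type) (s : seq I) (F : I -> U) :
  linmap g -> g (\sum_(i <- s) F i) = \sum_(i <- s) g (F i).
Proof.
move=> hg; elim: s => [|i s IH]; first by rewrite !big_nil linmap0.
by rewrite !big_cons linmapD // IH.
Qed.

Lemma tmul_bilin (U V : lmodType R) : bilinear_map (fun (u : U) (v : V) => u ⊗ v).
Proof.
split=> a u u' v; apply: tensor_eqP => W f hf;
  change (tlift f (tmul (a *: u + u') v) = tlift f (a *: (u ⊗ v) + u' ⊗ v)) ||
  change (tlift f (tmul u (a *: u' + v)) = tlift f (a *: (u ⊗ u') + u ⊗ v));
  by rewrite tlift_addE // tlift_scaleE // !tlift_tmul //; case: hf.
Qed.

Lemma lin_push (U V : lmodType R) (W W' : lmodType R) (g : W -> W') (K : U -> V -> W) t :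
  linmap g -> g (tlift K t) = tlift (fun u v => g (K u v)) t.
Proof. by move=> hg; rewrite /tlift /tsum linmap_sum. Qed.

Lemma tensor_sum (U V : lmodType R) (t : tensor U V) : t = tlift (fun u v => u ⊗ v) t.
Proof.
apply: tensor_eqP => W f hf.
change (tlift f t = tlift f (tlift (fun u v => u ⊗ v) t)).
rewrite lin_push; last exact: tlift_lin.
by apply: eq_tlift => u v; rewrite tlift_tmul.
Qed.

Lemma tlift_tlift (U V U' V' : lmodType R) (W : lmodType R) (F : U' -> V' -> W)
   (K : U -> V -> tensor U' V') t :
  bilinear_map F -> tlift F (tlift K t) = tlift (fun u v => tlift F (K u v)) t.
Proof. by move=> hF; apply: lin_push; apply: tlift_lin. Qed.

Lemma lin_ext (U V : lmodType R) (W : lmodType R) (g : tensor U V -> W) t :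
  linmap g -> g t = tlift (fun u v => g (u ⊗ v)) t.
Proof. by move=> hg; rewrite {1}(tensor_sum t) lin_push. Qed.

Lemma bilinP (U V W : lmodType R) (f : U -> V -> W) :
  (forall v, linmap (fun u => f u v)) -> (forall u, linmap (f u)) -> bilinear_map f.
Proof. by move=> h1 h2; split=> a u u' v; [apply: h1 | apply: h2]. Qed.

Lemma lin_id (U : lmodType R) : linmap (fun x : U => x). Proof. by []. Qed.

Lemma lin_tmull (X U V : lmodType R) (v : V) (E : X -> U) :
  linmap E -> linmap (fun x => E x ⊗ v).
Proof. by move=> hE a x y; rewrite hE; case: (tmul_bilin U V) => ->. Qed.

Lemma lin_tmulr (X U V : lmodType R) (u : U) (E : X -> V) :
  linmap E -> linmap (fun x => u ⊗ E x).
Proof. by move=> hE a x y; rewrite hE; case: (tmul_bilin U V) => _ ->. Qed.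

Lemma lin_tlift_param (X U V W : lmodType R) (F : X -> U -> V -> W) t :
  (forall u v, linmap (fun x => F x u v)) -> linmap (fun x => tlift (F x) t).
Proof.
move=> hF a x y; rewrite /tlift /tsum scaler_sumr -big_split /=.
by apply: eq_bigr => p _; rewrite hF.
Qed.

Lemma lin_tlift_comp (X U V W : lmodType R) (F : U -> V -> W) (E : X -> tensor U V) :
  bilinear_map F -> linmap E -> linmap (fun x => tlift F (E x)).
Proof. by move=> hF hE a x y; rewrite hE tlift_lin. Qed.

Lemma lin_mulr (X : lmodType R) (A : lalgType R) (m : A) (E : X -> A) :
  linmap E -> linmap (fun x => E x * m).
Proof. by move=> hE a x y; rewrite hE mulrDl scalerAl. Qed.

Lemma lin_mull (X : lmodType R) (A : algType R) (u : A) (E : X -> A) :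
  linmap E -> linmap (fun x => u * E x).
Proof. by move=> hE a x y; rewrite hE mulrDr scalerAr. Qed.

Lemma lin_comp (X Y Z : lmodType R) (f : Y -> Z) (E : X -> Y) :
  linmap f -> linmap E -> linmap (fun x => f (E x)).
Proof. by move=> hf hE a x y; rewrite hE hf. Qed.

Lemma lin_comp2 (X Y Z : lmodType R) (P : Type) (f : Y -> P -> Z) (p : P) (E : X -> Y) :
  linmap (fun y => f y p) -> linmap E -> linmap (fun x => f (E x) p).
Proof. by move=> hf hE a x y; rewrite hE hf. Qed.


End Infra.

Lemma bilin_l (R : comNzRingType) (U V W : lmodType R) (f : U -> V -> W) :
  bilinear_map f -> forall v, linmap (fun u => f u v).
Proof. by case=> h _ v a x y; apply: h. Qed.
Lemma bilin_r (R : comNzRingType) (U V W : lmodType R) (f : U -> V -> W) :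
  bilinear_map f -> forall u, linmap (f u).
Proof. by case=> _ h u a x y; apply: h. Qed.

Ltac linhyp := match goal with
  | H : bilinear_map _ |- _ => first [apply: (bilin_l H) | apply: (bilin_r H)]
  | H : _ |- _ => apply: H end.
Ltac linhook := fail.

Ltac lin := cbv beta; first
 [ apply: lin_id
 | apply: lin_tlift_param; intros ? ?; lin
 | apply: lin_tlift_comp; [bilin | lin]
 | apply: lin_tmull; lin
 | apply: lin_tmulr; lin
 | apply: lin_mulr; lin
 | apply: lin_mull; lin
 | solve [linhyp | linhook]
 | apply: lin_comp; [solve [linhyp | linhook] | lin]
 | apply: lin_comp2; [solve [linhyp | linhook] | lin] ]
with bilin := apply: bilinP; [intro; lin | intro; lin].

Section Infra2.
Variable R : comNzRingType.

Lemma tlift_tmap (U V U' V' W : lmodType R) (F : U' -> V' -> W) (f : U -> U') (g : V -> V') t :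
  bilinear_map F -> tlift F (tmap f g t) = tlift (fun u v => F (f u) (g v)) t.
Proof.
move=> hF; rewrite /tmap tlift_tlift //; apply: eq_tlift => u v.
by rewrite tlift_tmul.
Qed.

Lemma tlift_tassoc (U V X W : lmodType R) (G : U -> V -> X -> W) t :
  (forall b c, linmap (fun a => G a b c)) -> (forall a c, linmap (fun b => G a b c)) ->
  (forall a b, linmap (G a b)) ->
  tlift (fun s w => tlift (fun u v => G u v w) s) (tassoc t)
  = tlift (fun u s => tlift (fun v w => G u v w) s) t.
Proof.
move=> h1 h2 h3; rewrite /tassoc tlift_tlift; last by bilin.
apply: eq_tlift => u s; rewrite tlift_tlift; last by bilin.
apply: eq_tlift => v w; rewrite tlift_tmul; last by bilin.
by rewrite tlift_tmul //; bilin.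
Qed.

Lemma tlift_talg_mul (B C : algType R) (W : lmodType R) (F : B -> C -> W) s t :
  bilinear_map F ->
  tlift F (talg_mul s t) = tlift (fun b c => tlift (fun b' c' => F (b * b') (c * c')) t) s.
Proof.
move=> hF; rewrite /talg_mul tlift_tlift; last by bilin.
apply: eq_tlift => b c; rewrite tlift_tlift; last by bilin.
apply: eq_tlift => b' c'.
by rewrite tlift_tmul.
Qed.

Lemma tlift_tact (H U V W : lmodType R) (Delta : H -> tensor H H) (actU : H -> U -> U)
   (actV : H -> V -> V) (F : U -> V -> W) x t :
  bilinear_map F ->
  tlift F (tact Delta actU actV x t)
  = tlift (fun h h' => tlift (fun u v => F (actU h u) (actV h' v)) t) (Delta x).
Proof.
move=> hF; rewrite /tact lin_push; last exact: tlift_lin.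
by apply: eq_tlift => h h'; rewrite tlift_tmap.
Qed.

#[export] Instance tlift_proper (U V : lmodType R) (W : zmodType) :
  Proper (pointwise_relation U (pointwise_relation V eq) ==> eq ==> eq) (@tlift R U V W).
Proof. move=> f g e t _ <-; apply: eq_tlift => u v; exact: e. Qed.

Lemma tmul_push (U X Y : lmodType R) (u : U) (W : lmodType R) (K : X -> Y -> W) t :
  u ⊗ tlift K t = tlift (fun a b => u ⊗ K a b) t.
Proof. by apply: lin_push; lin. Qed.

Lemma tmul_pushl (U X Y : lmodType R) (u : U) (W : lmodType R) (K : X -> Y -> W) t :
  tlift K t ⊗ u = tlift (fun a b => K a b ⊗ u) t.
Proof. by apply: (lin_push (g := fun x => x ⊗ u)); lin. Qed.

Lemma mul_pushr (X Y : lmodType R) (B : algType R) (m : B) (K : X -> Y -> B) t :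
  m * tlift K t = tlift (fun a b => m * K a b) t.
Proof. by apply: (lin_push (g := fun x => m * x)); lin. Qed.

Lemma mul_pushl (X Y : lmodType R) (B : algType R) (m : B) (K : X -> Y -> B) t :
  tlift K t * m = tlift (fun a b => K a b * m) t.
Proof. by apply: (lin_push (g := fun x => x * m)); lin. Qed.

Lemma tmap_pure (U V U' V' : lmodType R) (f : U -> U') (g : V -> V') u v :
  linmap f -> linmap g -> tmap f g (u ⊗ v) = f u ⊗ g v.
Proof. by move=> hf hg; rewrite /tmap tlift_tmul //; bilin. Qed.

End Infra2.

Section Main.
Variables (k : comNzRingType) (H : algType k) (Delta : H -> tensor H H) (eps : H -> k) (S : H -> H).
Hypothesis hopf : is_hopf Delta eps S.
Variables (L : algType k) (actL : H -> L -> L) (coact : L -> tensor H L).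
Hypothesis base : is_base_algebra Delta eps actL coact.
Variables (A : lmodType k) (actA : H -> A -> A).
Hypothesis modA : is_Hmodule actA.
Variable star : tensor A A -> tensor A L.
Hypothesis star_lin : linmap star.
Hypothesis star_equiv : forall x t,
     star (tact Delta actA actA x t) = tact Delta actA actL x (star t).

Lemma linD : linmap Delta. Proof. by case: hopf => [[]]. Qed.
Lemma coassD x : tmap Delta id (Delta x) = tassoc (tmap id Delta (Delta x)).
Proof. by case: hopf. Qed.
Lemma bilA : bilinear_map actA. Proof. by case: modA. Qed.
Lemma actA1 a : actA 1 a = a. Proof. by case: modA. Qed.
Lemma actAM x y a : actA (x * y) a = actA x (actA y a). Proof. by case: modA. Qed.
Lemma bilL : bilinear_map actL. Proof. by case: base => [[[]]]. Qed.
Lemma actLM x y a : actL (x * y) a = actL x (actL y a). Proof. by case: base => [[[]]]. Qed.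
Lemma actLmul x l1 l2 :
  actL x (l1 * l2) = tlift (fun h h' => actL h l1 * actL h' l2) (Delta x).
Proof. by case: base => [[]]. Qed.
Lemma linC : linmap coact. Proof. by case: base => _ []. Qed.
Lemma coassC l : tmap Delta id (coact l) = tassoc (tmap id coact (coact l)).
Proof. by case: base => _ []. Qed.
Lemma coactM l1 l2 : coact (l1 * l2) = talg_mul (coact l1) (coact l2).
Proof. by case: base => _ []. Qed.
Lemma coact1 : coact 1 = 1 ⊗ 1.
Proof. by case: base => _ []. Qed.
Lemma compat x l :
  tlift (fun h h' => tlift (fun g m => (g * h') ⊗ m) (coact (actL h l))) (Delta x)
  = tlift (fun h h' => tlift (fun g m => (h * g) ⊗ actL h' m) (coact l)) (Delta x).
Proof. by case: base. Qed.
Lemma baseax l1 l2 : l1 * l2 = tlift (fun h m => actL h l2 * m) (coact l1).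
Proof. by case: base. Qed.

Lemma linAr h : linmap (actA h). Proof. exact: (bilin_r bilA). Qed.
Lemma linAl a : linmap (fun h => actA h a). Proof. exact: (bilin_l bilA). Qed.
Lemma linLr h : linmap (actL h). Proof. exact: (bilin_r bilL). Qed.
Lemma linLl a : linmap (fun h => actL h a). Proof. exact: (bilin_l bilL). Qed.

Ltac linhook ::= first [ apply: linD | apply: linC | apply: star_lin | apply: linAr
  | apply: linAl | apply: linLr | apply: linLl ].

Lemma CA_D (W : lmodType k) (G : H -> H -> H -> W)
  (h1 : forall b c, linmap (fun a => G a b c)) (h2 : forall a c, linmap (fun b => G a b c))
  (h3 : forall a b, linmap (G a b)) x :
  tlift (fun h h' => tlift (fun h1 h2 => G h1 h2 h') (Delta h)) (Delta x)
  = tlift (fun h h' => tlift (fun g1 g2 => G h g1 g2) (Delta h')) (Delta x).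
Proof.
have e := congr1 (tlift (fun t w => tlift (fun u v => G u v w) t)) (coassD x).
rewrite tlift_tmap in e; last by bilin.
rewrite tlift_tassoc // tlift_tmap in e; last by bilin.
exact: e.
Qed.

Lemma CA_C (W : lmodType k) (G : H -> H -> L -> W)
  (h1 : forall b c, linmap (fun a => G a b c)) (h2 : forall a c, linmap (fun b => G a b c))
  (h3 : forall a b, linmap (G a b)) l :
  tlift (fun h m => tlift (fun h1 h2 => G h1 h2 m) (Delta h)) (coact l)
  = tlift (fun h m => tlift (fun h2 m2 => G h h2 m2) (coact m)) (coact l).
Proof.
have e := congr1 (tlift (fun t w => tlift (fun u v => G u v w) t)) (coassC l).
rewrite tlift_tmap in e; last by bilin.
rewrite tlift_tassoc // tlift_tmap in e; last by bilin.
exact: e.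
Qed.

Notation dp := (dprod coact actA star).

Lemma dp_lin_l v : linmap (fun u => dp u v).
Proof. rewrite /dprod; lin. Qed.
Lemma dp_lin_r u : linmap (dp u).
Proof. rewrite /dprod; lin. Qed.
Lemma dp_bil : bilinear_map (fun u v => dp u v).
Proof. apply: bilinP => v; [exact: dp_lin_l | exact: dp_lin_r]. Qed.

Lemma dp_pure a l a' l' : dp (a ⊗ l) (a' ⊗ l') =
  tlift (fun h l2 => tlift (fun c l'' => c ⊗ (l'' * (l2 * l'))) (star (a ⊗ actA h a'))) (coact l).
Proof.
rewrite /dprod tlift_tmul; last by bilin.
by rewrite tlift_tmul; last by bilin.
Qed.

Lemma dp_ext u v : dp u v = tlift (fun a l => tlift (fun a' l' => dp (a ⊗ l) (a' ⊗ l')) v) u.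
Proof.
rewrite {1}/dprod; apply: eq_tlift => a l; apply: eq_tlift => a' l'.
by rewrite dp_pure.
Qed.

Lemma dp_r u a' l' : dp u (a' ⊗ l') = tlift (fun a l => dp (a ⊗ l) (a' ⊗ l')) u.
Proof. rewrite dp_ext; apply: eq_tlift => a l; rewrite tlift_tmul //; bilin. Qed.

Lemma dp_l a l v : dp (a ⊗ l) v = tlift (fun a' l' => dp (a ⊗ l) (a' ⊗ l')) v.
Proof. rewrite dp_ext tlift_tmul //; bilin. Qed.

Lemma dp_11 a a' : dp (a ⊗ 1) (a' ⊗ 1) = star (a ⊗ a').
Proof.
rewrite dp_pure coact1 tlift_tmul; last by bilin.
rewrite actA1 [RHS]tensor_sum; apply: eq_tlift => c l.
by rewrite mul1r mulr1.
Qed.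

Lemma assoc_dyn : (forall u v w, dp (dp u v) w = dp u (dp v w)) ->
  is_dynamical_assoc coact actA star.
Proof.
move=> hA t; rewrite /dyn_lhs /dyn_rhs /tau; apply: eq_tlift => t' a3.
rewrite {1}(tensor_sum t') lin_push // tlift_tlift; last by bilin.
apply: eq_tlift => a1 a2.
have e := hA (a1 ⊗ 1) (a2 ⊗ 1) (a3 ⊗ 1).
rewrite !dp_11 dp_r dp_l in e.
transitivity (tlift (fun b l => dp (b ⊗ l) (a3 ⊗ 1)) (star (a1 ⊗ a2))).
  apply: eq_tlift => b l; rewrite dp_pure tlift_tmul; last by bilin.
  rewrite tlift_tlift; last by bilin.
  apply: eq_tlift => h m; rewrite tlift_tmul; last by bilin.
  by apply: eq_tlift => c l'; rewrite mulr1.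
rewrite e; apply: eq_tlift => b l.
rewrite dp_pure coact1 tlift_tmul; last by bilin.
by rewrite actA1; apply: eq_tlift => c l'; rewrite mul1r.
Qed.

Notation TL := (tact Delta actA actL).
Notation TA := (tact Delta actA actA).

Lemma TL_lin x : linmap (TL x).
Proof. rewrite /tact /tmap; lin. Qed.

Lemma T_push (X Y : lmodType k) x (K : X -> Y -> tensor A L) t :
  TL x (tlift K t) = tlift (fun u v => TL x (K u v)) t.
Proof. apply: lin_push; exact: TL_lin. Qed.

Lemma T_pure x c n : TL x (c ⊗ n) = tlift (fun h h' => actA h c ⊗ actL h' n) (Delta x).
Proof. by rewrite /tact; apply: eq_tlift => h h'; rewrite tmap_pure //; lin. Qed.

Lemma T_ext x u : TL x u = tlift (fun a l => TL x (a ⊗ l)) u.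
Proof. apply: lin_ext; exact: TL_lin. Qed.

Lemma dp_push_l (X Y : lmodType k) (K : X -> Y -> tensor A L) t w :
  dp (tlift K t) w = tlift (fun a b => dp (K a b) w) t.
Proof. apply: (lin_push (g := fun u => dp u w)); exact: dp_lin_l. Qed.

Lemma dp_push_r (X Y : lmodType k) (K : X -> Y -> tensor A L) t w :
  dp w (tlift K t) = tlift (fun a b => dp w (K a b)) t.
Proof. apply: lin_push; exact: dp_lin_r. Qed.

Lemma star_push (X Y : lmodType k) (K : X -> Y -> tensor A A) t :
  star (tlift K t) = tlift (fun a b => star (K a b)) t.
Proof. exact: lin_push. Qed.

Lemma LA1 x c m l2 l' :
  tlift (fun h h' => tlift (fun p q => tlift (fun q1 q2 =>
     actA h c ⊗ (actL p m * (actL q1 l2 * actL q2 l'))) (Delta q)) (Delta h')) (Delta x)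
  = tlift (fun y q => tlift (fun h p => tlift (fun q1 q2 =>
     actA h c ⊗ (actL p m * (actL q1 l2 * actL q2 l'))) (Delta q)) (Delta y)) (Delta x).
Proof.
symmetry; apply: (CA_D (G := fun h p q => tlift (fun q1 q2 =>
     actA h c ⊗ (actL p m * (actL q1 l2 * actL q2 l'))) (Delta q))) => *; lin.
Qed.

Lemma LA2 x (t0 : tensor A L) l2 l' :
  tlift (fun c m => tlift (fun y q => tlift (fun h p => tlift (fun q1 q2 =>
     actA h c ⊗ (actL p m * (actL q1 l2 * actL q2 l'))) (Delta q)) (Delta y)) (Delta x)) t0
  = tlift (fun y q => tlift (fun q1 q2 => tlift (fun h p => tlift (fun c m =>
     actA h c ⊗ (actL p m * (actL q1 l2 * actL q2 l'))) t0) (Delta y)) (Delta q)) (Delta x).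
Proof.
rewrite tlift_swap; apply: eq_tlift => y q.
rewrite [RHS]tlift_swap [LHS]tlift_swap; apply: eq_tlift => h p.
by rewrite tlift_swap.
Qed.

Lemma EQ1 y a b N :
  tlift (fun h p => tlift (fun c m => actA h c ⊗ (actL p m * N)) (star (a ⊗ b))) (Delta y)
  = tlift (fun h p => tlift (fun c m => c ⊗ (m * N)) (star (actA h a ⊗ actA p b))) (Delta y).
Proof.
have e := congr1 (tlift (fun c m => c ⊗ (m * N))) (star_equiv y (a ⊗ b)).
rewrite tlift_tact in e; last by bilin.
rewrite -e /tact star_push tlift_tlift; last by bilin.
by apply: eq_tlift => h p; rewrite tmap_pure //; lin.
Qed.

Lemma PB_L x a l a' l' : TL x (dp (a ⊗ l) (a' ⊗ l')) =
  tlift (fun h0 l2 => tlift (fun y q => tlift (fun q1 q2 => tlift (fun h p =>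
    tlift (fun c o => c ⊗ (o * (actL q1 l2 * actL q2 l'))) (star (actA h a ⊗ actA (p * h0) a')))
    (Delta y)) (Delta q)) (Delta x)) (coact l).
Proof.
rewrite dp_pure T_push. setoid_rewrite T_push. setoid_rewrite T_pure.
setoid_rewrite actLmul. setoid_rewrite tmul_push. setoid_rewrite actLmul.
setoid_rewrite mul_pushr. setoid_rewrite tmul_push.
apply: eq_tlift => h0 l2.
setoid_rewrite LA1. rewrite LA2.
apply: eq_tlift => y q; apply: eq_tlift => q1 q2.
rewrite EQ1. setoid_rewrite <- actAM. done.
Qed.

Lemma CA4a (W : lmodType k) (G : H -> H -> H -> H -> W)
  (g1 : forall b c d, linmap (fun a => G a b c d)) (g2 : forall a c d, linmap (fun b => G a b c d))
  (g3 : forall a b d, linmap (fun c => G a b c d)) (g4 : forall a b c, linmap (G a b c)) x :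
  tlift (fun h h' => tlift (fun h1 h2 => tlift (fun e1 e2 => G h1 h2 e1 e2) (Delta h')) (Delta h)) (Delta x)
  = tlift (fun h1 r => tlift (fun z e2 => tlift (fun h2 e1 => G h1 h2 e1 e2) (Delta z)) (Delta r)) (Delta x).
Proof.
rewrite (CA_D (G := fun h1 h2 h' => tlift (fun e1 e2 => G h1 h2 e1 e2) (Delta h'))); try by move=> *; lin.
apply: eq_tlift => h1 r; symmetry.
apply: (CA_D (G := fun h2 e1 e2 => G h1 h2 e1 e2)) => *; lin.
Qed.

Lemma CA4b (W : lmodType k) (G : H -> H -> H -> H -> W)
  (g1 : forall b c d, linmap (fun a => G a b c d)) (g2 : forall a c d, linmap (fun b => G a b c d))
  (g3 : forall a b d, linmap (fun c => G a b c d)) (g4 : forall a b c, linmap (G a b c)) x :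
  tlift (fun a r => tlift (fun z d => tlift (fun b c => G a b c d) (Delta z)) (Delta r)) (Delta x)
  = tlift (fun y q => tlift (fun a b => tlift (fun c d => G a b c d) (Delta q)) (Delta y)) (Delta x).
Proof.
transitivity (tlift (fun a r => tlift (fun b s => tlift (fun c d => G a b c d) (Delta s))
   (Delta r)) (Delta x)).
  apply: eq_tlift => a r.
  apply: (CA_D (G := fun b c d => G a b c d)) => *; lin.
symmetry; apply: (CA_D (G := fun a b s => tlift (fun c d => G a b c d) (Delta s))) => *; lin.
Qed.

Lemma COMPg (W : lmodType k) (K : H -> L -> W) (hK : bilinear_map K) z l :
  tlift (fun h h' => tlift (fun g m => K (g * h') m) (coact (actL h l))) (Delta z)
  = tlift (fun h h' => tlift (fun g m => K (h * g) (actL h' m)) (coact l)) (Delta z).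
Proof.
transitivity (tlift K
  (tlift (fun h h' => tlift (fun g m => (g * h') ⊗ m) (coact (actL h l))) (Delta z))).
  rewrite tlift_tlift; last by bilin.
  apply: eq_tlift => h h'; rewrite tlift_tlift; last by bilin.
  by apply: eq_tlift => g m; rewrite tlift_tmul.
rewrite compat tlift_tlift; last by bilin.
apply: eq_tlift => h h'; rewrite tlift_tlift; last by bilin.
by apply: eq_tlift => g m; rewrite tlift_tmul.
Qed.

Lemma COMP a l a' l' h1 e2 z :
  tlift (fun h2 e1 => tlift (fun f n => tlift (fun c o => c ⊗ (o * (n * actL e2 l')))
     (star (actA h1 a ⊗ actA (f * e1) a'))) (coact (actL h2 l))) (Delta z)
  = tlift (fun z1 z2 => tlift (fun h0 l2 => tlift (fun c o => c ⊗ (o * (actL z2 l2 * actL e2 l')))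
     (star (actA h1 a ⊗ actA (z1 * h0) a'))) (coact l)) (Delta z).
Proof.
apply: (COMPg (K := fun hh nn => tlift (fun c o => c ⊗ (o * (nn * actL e2 l')))
     (star (actA h1 a ⊗ actA hh a')))); bilin.
Qed.

Lemma PB_R x a l a' l' :
  tlift (fun h h' => dp (TL h (a ⊗ l)) (TL h' (a' ⊗ l'))) (Delta x) =
  tlift (fun y q => tlift (fun h p => tlift (fun q1 q2 => tlift (fun h0 l2 =>
    tlift (fun c o => c ⊗ (o * (actL q1 l2 * actL q2 l'))) (star (actA h a ⊗ actA (p * h0) a')))
    (coact l)) (Delta q)) (Delta y)) (Delta x).
Proof.
setoid_rewrite T_pure.
setoid_rewrite dp_push_l. setoid_rewrite dp_push_r. setoid_rewrite dp_pure.
setoid_rewrite <- actAM.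
rewrite (CA4a (G := fun h1 h2 e1 e2 => tlift (fun f n => tlift (fun c o => c ⊗ (o * (n * actL e2 l')))
     (star (actA h1 a ⊗ actA (f * e1) a'))) (coact (actL h2 l)))); try by move=> *; lin.
setoid_rewrite COMP.
apply: (CA4b (G := fun h1 z1 z2 e2 => tlift (fun h0 l2 => tlift (fun c o => c ⊗ (o * (actL z2 l2 * actL e2 l')))
     (star (actA h1 a ⊗ actA (z1 * h0) a'))) (coact l))) => *; lin.
Qed.

Lemma PB x a l a' l' : TL x (dp (a ⊗ l) (a' ⊗ l')) =
  tlift (fun h h' => dp (TL h (a ⊗ l)) (TL h' (a' ⊗ l'))) (Delta x).
Proof.
rewrite PB_L PB_R [LHS]tlift_swap; apply: eq_tlift => y q.
rewrite [LHS]tlift_swap.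
under eq_tlift => q1 q2 do rewrite tlift_swap.
by rewrite [LHS]tlift_swap.
Qed.

Lemma modalg x u v : TL x (dp u v) = tlift (fun h h' => dp (TL h u) (TL h' v)) (Delta x).
Proof.
transitivity (tlift (fun h h' => tlift (fun a l => tlift (fun a' l' =>
   dp (TL h (a ⊗ l)) (TL h' (a' ⊗ l'))) v) u) (Delta x)); last first.
  apply: eq_tlift => h h'; rewrite (T_ext h u) (T_ext h' v) dp_push_l.
  by apply: eq_tlift => a l; rewrite dp_push_r.
rewrite tlift_swap dp_ext T_push; apply: eq_tlift => a l.
rewrite tlift_swap T_push; apply: eq_tlift => a' l'.
exact: PB.
Qed.

Lemma AM1 c m l2 l' a'' l'' :
  tlift (fun g n => tlift (fun d o => d ⊗ (o * (n * l''))) (star (c ⊗ actA g a'')))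
    (coact (m * (l2 * l')))
  = tlift (fun g1 n1 => tlift (fun g2 n2 => tlift (fun g3 n3 =>
      tlift (fun d o => d ⊗ ((o * n1) * ((n2 * n3) * l'')))
        (star (c ⊗ actA g1 (actA (g2 * g3) a''))))
      (coact l')) (coact l2)) (coact m).
Proof.
rewrite coactM tlift_talg_mul; last by bilin.
apply: eq_tlift => g1 n1; rewrite coactM tlift_talg_mul; last by bilin.
apply: eq_tlift => g2 n2; apply: eq_tlift => g3 n3.
rewrite actAM; apply: eq_tlift => d o.
by rewrite !mulrA.
Qed.

Hypothesis hD : is_dynamical_assoc coact actA star.

Lemma DYN a Y X M :
  tlift (fun c m => tlift (fun g1 n1 => tlift (fun d o => d ⊗ ((o * n1) * M))
     (star (c ⊗ actA g1 X))) (coact m)) (star (a ⊗ Y))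
  = tlift (fun b p => tlift (fun d o => d ⊗ ((o * p) * M)) (star (a ⊗ b))) (star (Y ⊗ X)).
Proof.
transitivity (tlift (fun d z => d ⊗ (z * M)) (dyn_lhs coact actA star ((a ⊗ Y) ⊗ X))).
  rewrite /dyn_lhs /tau tlift_tmul; last by bilin.
  rewrite tlift_tlift; last by bilin.
  apply eq_tlift => c m; rewrite tlift_tmul; last by bilin.
  rewrite tlift_tlift; last by bilin.
  rewrite tlift_tlift; last by bilin.
  apply: eq_tlift => g1 n1; rewrite tlift_tmul; last by bilin.
  rewrite tlift_tlift; last by bilin.
  by apply: eq_tlift => d o; rewrite tlift_tmul //; bilin.
rewrite hD /dyn_rhs tlift_tmul; last by bilin.
rewrite tlift_tmul; last by bilin.
rewrite tlift_tlift; last by bilin.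
apply: eq_tlift => b p; rewrite tlift_tlift; last by bilin.
by apply: eq_tlift => d o; rewrite tlift_tmul //; bilin.
Qed.

Lemma DYN' a Y l2 l' a'' l'' :
  tlift (fun c m => tlift (fun g1 n1 => tlift (fun g2 n2 => tlift (fun g3 n3 =>
      tlift (fun d o => d ⊗ ((o * n1) * ((n2 * n3) * l'')))
        (star (c ⊗ actA g1 (actA (g2 * g3) a''))))
      (coact l')) (coact l2)) (coact m)) (star (a ⊗ Y))
  = tlift (fun g2 n2 => tlift (fun g3 n3 =>
      tlift (fun b p => tlift (fun d o => d ⊗ ((o * p) * ((n2 * n3) * l''))) (star (a ⊗ b)))
        (star (Y ⊗ actA (g2 * g3) a''))) (coact l')) (coact l2).
Proof.
under eq_tlift => c m do rewrite tlift_swap.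
under eq_tlift => c m do under eq_tlift => g2 n2 do rewrite tlift_swap.
rewrite [LHS]tlift_swap.
under eq_tlift => g2 n2 do rewrite tlift_swap.
apply: eq_tlift => g2 n2; apply: eq_tlift => g3 n3.
exact: DYN.
Qed.

Lemma EQ2 h' a' Z a N :
  tlift (fun h g2 => tlift (fun b p => tlift (fun d o => d ⊗ ((o * p) * N)) (star (a ⊗ b)))
     (star (actA h a' ⊗ actA g2 Z))) (Delta h')
  = tlift (fun h g2 => tlift (fun b0 p0 => tlift (fun d o => d ⊗ ((o * actL g2 p0) * N))
     (star (a ⊗ actA h b0))) (star (a' ⊗ Z))) (Delta h').
Proof.
have e := congr1 (tlift (fun b p => tlift (fun d o => d ⊗ ((o * p) * N)) (star (a ⊗ b))))
   (star_equiv h' (a' ⊗ Z)).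
rewrite tlift_tact in e; last by bilin.
rewrite -e /tact star_push tlift_tlift; last by bilin.
by apply: eq_tlift => h p; rewrite tmap_pure //; lin.
Qed.

Lemma RP1 a b0 p0 n3 l'' l :
  tlift (fun h' n2 => tlift (fun d o => d ⊗ (o * (n2 * (p0 * (n3 * l'')))))
     (star (a ⊗ actA h' b0))) (coact l)
  = tlift (fun h' t => tlift (fun h s => tlift (fun d o => d ⊗ (o * ((actL s p0 * t) * (n3 * l''))))
     (star (a ⊗ actA h b0))) (Delta h')) (coact l).
Proof.
transitivity (tlift (fun h' n2 => tlift (fun s t => tlift (fun d o =>
   d ⊗ (o * ((actL s p0 * t) * (n3 * l'')))) (star (a ⊗ actA h' b0))) (coact n2)) (coact l)).
  apply: eq_tlift => h' n2.
  rewrite tlift_swap; apply: eq_tlift => d o.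
  rewrite (mulrA n2 p0) (baseax n2 p0) mul_pushl mul_pushr tmul_push.
  done.
symmetry; apply: (CA_C (G := fun h s t => tlift (fun d o =>
   d ⊗ (o * ((actL s p0 * t) * (n3 * l'')))) (star (a ⊗ actA h b0)))) => *; lin.
Qed.

Lemma PA a l a' l' a'' l'' :
  dp (dp (a ⊗ l) (a' ⊗ l')) (a'' ⊗ l'') = dp (a ⊗ l) (dp (a' ⊗ l') (a'' ⊗ l'')).
Proof.
have -> : dp (a ⊗ l) (dp (a' ⊗ l') (a'' ⊗ l'')) =
  tlift (fun g3 n3 => tlift (fun b0 p0 => tlift (fun h' t => tlift (fun h s =>
    tlift (fun d o => d ⊗ (o * ((actL s p0 * t) * (n3 * l''))))
     (star (a ⊗ actA h b0))) (Delta h')) (coact l)) (star (a' ⊗ actA g3 a''))) (coact l').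
  rewrite [dp (a' ⊗ _) _]dp_pure dp_push_r; apply: eq_tlift => g3 n3.
  rewrite dp_push_r; apply: eq_tlift => b0 p0.
  by rewrite dp_pure RP1.
rewrite dp_pure dp_push_l. setoid_rewrite dp_push_l. setoid_rewrite dp_pure.
setoid_rewrite AM1. setoid_rewrite DYN'.
rewrite -(CA_C (G := fun h g2 n2 => tlift (fun g3 n3 =>
      tlift (fun b p => tlift (fun d o => d ⊗ ((o * p) * ((n2 * n3) * l''))) (star (a ⊗ b)))
        (star (actA h a' ⊗ actA (g2 * g3) a''))) (coact l'))); try by move=> *; lin.
setoid_rewrite actAM.
under eq_tlift => h' n2 do rewrite tlift_swap.
setoid_rewrite EQ2.
rewrite [LHS]tlift_swap; apply: eq_tlift => g3 n3.
under eq_tlift => h' n2 do rewrite tlift_swap.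
rewrite [LHS]tlift_swap; apply: eq_tlift => b0 p0.
apply: eq_tlift => h' n2; apply: eq_tlift => h s; apply: eq_tlift => d o.
by rewrite !mulrA.
Qed.

Lemma dp_extr X w : dp X w = tlift (fun a l => dp X (a ⊗ l)) w.
Proof. apply: lin_ext; exact: dp_lin_r. Qed.

Lemma dp_extl u Y : dp u Y = tlift (fun a l => dp (a ⊗ l) Y) u.
Proof. apply: (lin_ext (g := fun u => dp u Y)); exact: dp_lin_l. Qed.

Lemma assoc_gen u v w : dp (dp u v) w = dp u (dp v w).
Proof.
transitivity (tlift (fun a l => tlift (fun a' l' => tlift (fun a'' l'' =>
   dp (dp (a ⊗ l) (a' ⊗ l')) (a'' ⊗ l'')) w) v) u).
  rewrite (dp_ext u v) dp_push_l; apply: eq_tlift => a l.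
  rewrite dp_push_l; apply: eq_tlift => a' l'; exact: dp_extr.
rewrite dp_extl; apply: eq_tlift => a l.
rewrite (dp_ext v w) dp_push_r; apply: eq_tlift => a' l'.
rewrite dp_push_r; apply: eq_tlift => a'' l''; exact: PA.
Qed.

End Main.


Unset Implicit Arguments.
Set Strict Implicit.

Theorem proposition3p12
  (F : fieldType) (HF : [pchar F] =i pred0)
  (k : comNzRingType) (iota : {rmorphism F -> k})
  (H : algType k) (Delta : H -> tensor H H) (eps : H -> k) (S : H -> H)
  (hopf : is_hopf Delta eps S)
  (L : algType k) (actL : H -> L -> L) (coact : L -> tensor H L)
  (base : is_base_algebra Delta eps actL coact)
  (A : lmodType k) (actA : H -> A -> A) (modA : is_Hmodule actA)
  (star : tensor A A -> tensor A L)
  (star_lin : linmap star)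
  (star_equiv : forall x t,
     star (tact Delta actA actA x t) = tact Delta actA actL x (star t)) :
  is_dynamical_assoc coact actA star <->
  is_assoc_Hmodule_algebra_AL Delta actL coact actA star.
Proof.
split.
  move=> hD; split.
    exact: (assoc_gen base modA star_lin star_equiv hD).
  exact: (modalg hopf base modA star_lin star_equiv).
by case=> hA _; exact: (assoc_dyn base modA star_lin hA).
Qed.
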